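(* Let $Y(0),Y(1)$ be integrable real-valued potential outcomes and $X$ a random vector in $\mathbb{R}^{d_X}$, $d_X\geq 3$, with support $\mathcal{X}$, written (after reordering coordinates) as $X=(X^{(1)},X^{(2)})$ where $X^{(1)}$ consists of exactly two components and $X^{(2)}$ of the remaining ones; for $x\in\mathcal{X}$ write $x=(x^{(1)},x^{(2)})$ correspondingly. Suppose: (Deterministic treatment) $\mathcal{X}=\mathcal{X}_0\cup\mathcal{X}_1$ with $\mathcal{X}_0\cap\mathcal{X}_1=\emptyset$, $D=1\{X\in\mathcal{X}_1\}$ and $Y=DY(1)+(1-D)Y(0)$; (Continuity) $x\mapsto E[Y(0)|X=x]$ and $x\mapsto E[Y(1)|X=x]$ are continuous on $\mathcal{X}$; (Conditional comonotonicity) for all $x_1,x_2\in\mathcal{X}$ with $x_1^{(2)}=x_2^{(2)}$, $$E[Y(1)|X=x_1]\geq E[Y(1)|X=x_2]\iff E[Y(0)|X=x_1]\geq E[Y(0)|X=x_2].$$ Let $\mathcal{F}=\mathrm{cl}(\mathrm{int}(\mathcal{X}_1))\cap\mathrm{cl}(\mathrm{int}(\mathcal{X}_0))$ and for $d\in\{0,1\}$ let $g_d$ be a function on $\mathcal{X}_d\cup\mathcal{F}$ with $g_d(x)=E[Y|X=x]$ for $x\in\mathcal{X}_d$ and $g_d$ continuous at each point of $\mathcal{F}$. Then: (i) if $d\in\{0,1\}$, $x\in\mathcal{X}_d$ and there exists $x^*\in\mathcal{F}$ with $x^{*(2)}=x^{(2)}$ and $E[Y|X=x]=g_d(x^* )$,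 then $E[Y(1)|X=x]=g_1(x^* )$ and $E[Y(0)|X=x]=g_0(x^* )$; (ii) for any $x_1,x_2\in\mathcal{F}$ with $x_1^{(2)}=x_2^{(2)}$, $g_0(x_1)\geq g_0(x_2)\iff g_1(x_1)\geq g_1(x_2)$.
   Context: Conditional expectation functions $x\mapsto E[Y(d)|X=x]$ are understood as the unique continuous versions. For $x\in\mathcal{X}_d$, $E[Y|X=x]$ is understood as $E[Y(d)|X=x]$. $\mathrm{int}$ and $\mathrm{cl}$ denote interior and closure in $\mathbb{R}^{d_X}$. *)

(* Defs.v *)
From HB Require Import structures.
From mathcomp Require Import all_boot all_order all_algebra.
From mathcomp Require Import all_classical all_reals all_analysis.
Set Implicit Arguments. Unset Strict Implicit. Unset Printing Implicit Defensive.
Import Order.TTheory GRing.Theory Num.Theory.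
Import numFieldNormedType.Exports.
Local Open Scope classical_set_scope.
Local Open Scope ring_scope.

(* Points of R^{d_X} are row vectors 'rV[R]_dX (Euclidean topology via the
   max norm, which induces the usual topology). *)

Definition supp {d} {T : measurableType d} {R : realType} {n : nat}
  (P : probability T R) (X : T -> 'rV[R]_n) : set 'rV[R]_n :=
  [set x | forall r : R, 0 < r -> (0 < P (X @^-1` ball x r))%E].

(* m is a version of x |-> E[Y | X = x]: m(X) is integrable and
   E[Y 1{X in B}] = E[m(X) 1{X in B}] for every open B (open sets form a
   pi-system generating the Borel sets, so this characterizes the
   conditional expectation). *)
Definition cexp_version {d} {T : measurableType d} {R : realType} {n : nat}
  (P : probability T R) (X : T -> 'rV[R]_n) (Y : T -> R) (m : 'rV[R]_n -> R)
  : Prop :=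
  P.-integrable setT (EFin \o (m \o X)) /\
  forall B : set 'rV[R]_n, open B ->
    (\int[P]_(w in X @^-1` B) (Y w)%:E = \int[P]_(w in X @^-1` B) (m (X w))%:E)%E.

(* x^(2) = y^(2): agreement on the coordinates outside S, where S is the
   index set of the two components forming X^(1). *)
Definition same2 {R : realType} {n : nat} (S : {set 'I_n}) (x y : 'rV[R]_n)
  : Prop := forall i : 'I_n, i \notin S -> x ord0 i = y ord0 i.

(* Main.v *)
Require Import Defs.
From HB Require Import structures.
From mathcomp Require Import all_boot all_order all_algebra.
From mathcomp Require Import all_classical all_reals all_analysis.
From mathcomp Require Import measurable_realfun.
Import Order.TTheory GRing.Theory Num.Theory.
Import numFieldNormedType.Exports.
Local Open Scope classical_set_scope.
Local Open Scope ring_scope.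

Lemma ballE (R : realType) n (x y : 'rV[R]_n) r :
  ball x r y <-> (0 < r /\ forall j, ball (x ord0 j) r (y ord0 j)).
Proof.
split.
  by move=> [r0 H]; split => // j; apply: H.
by move=> [r0 H]; split => // i j; rewrite (ord1 i); apply: H.
Qed.

Lemma meas_ball (R : realType) (dm : measure_display) (T : measurableType dm)
  n (X : T -> 'rV[R]_n) (x : 'rV[R]_n) (r : R) :
  (forall i : 'I_n, measurable_fun setT (fun w => X w ord0 i)) -> 0 < r ->
  measurable (X @^-1` ball x r).
Proof.
move=> mX r0.
have -> : X @^-1` ball x r =
  \bigcap_(j in [set: 'I_n]) ((fun w => X w ord0 j) @^-1` ball (x ord0 j) r).
  apply/seteqP; split => w /=.
    by move=> /ballE [_ H] j _; apply: H.
  by move=> H; apply/ballE; split => // j; apply: H.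
apply: fin_bigcap_measurable; first exact: finite_finset.
move=> j _; rewrite -[_ @^-1` _]setTI; apply: (mX j) => //.
by apply: open_measurable; apply: ball_open.
Qed.

Lemma supp_closed (R : realType) (dm : measure_display) (T : measurableType dm)
  (P : probability T R) n (X : T -> 'rV[R]_n) :
  (forall i : 'I_n, measurable_fun setT (fun w => X w ord0 i)) ->
  closure (supp P X) `<=` supp P X.
Proof.
move=> mX x clx r r0.
have r20 : 0 < r / 2 by rewrite divr_gt0.
have [y [sy bxy]] := clx _ (nbhsx_ballx x _ r20).
apply: (lt_le_trans (sy _ r20)).
apply: le_measure; rewrite ?inE; try exact: meas_ball.
move=> w /= byw; rewrite [r](splitr r); exact: ball_triangle bxy byw.
Qed.

Theorem theorem3 (R : realType) (dm : measure_display) (T : measurableType dm)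
  (P : probability T R) (dX : nat) (S : {set 'I_dX})
  (X : T -> 'rV[R]_dX) (Ypot : bool -> T -> R) (Y : T -> R)
  (m : bool -> 'rV[R]_dX -> R) (Xs : bool -> set 'rV[R]_dX)
  (g : bool -> 'rV[R]_dX -> R) :
  (3 <= dX)%N ->
  #|S| = 2%N ->
  (forall i : 'I_dX, measurable_fun setT (fun w => X w ord0 i)) ->
  (forall b, measurable_fun setT (Ypot b)) ->
  (forall b, P.-integrable setT (EFin \o Ypot b)) ->
  (forall b, cexp_version P X (Ypot b) (m b)) ->
  (* deterministic treatment *)
  supp P X = Xs false `|` Xs true ->
  Xs false `&` Xs true = set0 ->
  (forall w, Y w = (if X w \in Xs true then Ypot true w else Ypot false w)) ->
  (* continuity *)
  (forall b, {within supp P X, continuous m b}) ->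
  (* conditional comonotonicity *)
  (forall x1 x2, supp P X x1 -> supp P X x2 -> same2 S x1 x2 ->
     (m true x2 <= m true x1 <-> m false x2 <= m false x1)) ->
  let F := closure (interior (Xs true)) `&` closure (interior (Xs false)) in
  (* g_d: equals E[Y|X=x] = E[Y(d)|X=x] on X_d, continuous at points of F
     as a function on X_d u F *)
  (forall b x, Xs b x -> g b x = m b x) ->
  (forall b x, F x -> g b @ within (Xs b `|` F) (nbhs x) --> g b x) ->
  (forall (b : bool) x xs, Xs b x -> F xs -> same2 S xs x ->
     m b x = g b xs -> m true x = g true xs /\ m false x = g false xs) /\
  (forall x1 x2, F x1 -> F x2 -> same2 S x1 x2 ->
     (g false x2 <= g false x1 <-> g true x2 <= g true x1)).
Proof.
move=> _ _ mX _ _ _ suppE _ _ mcont comon F gm gcont.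
have XsS : forall b, Xs b `<=` supp P X.
  by move=> b y Xy; rewrite suppE; case: b Xy => Xy; [right|left].
have key : forall b xs, F xs -> supp P X xs /\ g b xs = m b xs.
  move=> b xs Fxs.
  have cl : closure (interior (Xs b)) xs by case: b; case: Fxs.
  have IS : interior (Xs b) `<=` supp P X.
    by move=> y /interior_subset; apply: XsS.
  have sxs : supp P X xs.
    by apply: (@supp_closed _ _ _ P _ X mX); apply: (closureS IS).
  split => //.
  pose G := within (interior (Xs b)) (nbhs xs).
  have PG : ProperFilter G by apply: within_nbhs_proper.
  have hg : g b @ G --> g b xs.
    move=> U /(gcont b xs Fxs) /= HU.
    apply: (within_subset _ _ HU).
    by move=> y /interior_subset Xy; left.
  have hm : m b @ G --> m b xs.
    move=> U /(((subspace_continuousP (supp P X) (m b)).1 (mcont b)) xs sxs) /= HU.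
    exact: (within_subset _ _ HU).
  have hm' : g b @ G --> m b xs.
    have FG : Filter G by exact: PG.
    apply: cvg_trans hm; apply: (@near_eq_cvg _ _ G FG).
    rewrite /G /within /=; apply: (@filterS _ (nbhs xs) _ setT); last exact: filterT.
    move=> y _ Iy.
    by rewrite gm //; apply: interior_subset.
  exact: (cvg_unique _ hg hm').
have sym : forall x y : 'rV[R]_dX, same2 S x y -> same2 S y x.
  by move=> x y H i Hi; rewrite (H i Hi).
split.
  move=> b x xs Xx Fxs sxs.
  have [Sxs _] := key true xs Fxs.
  have Sx := XsS b x Xx.
  have c1 := comon x xs Sx Sxs (sym _ _ sxs).
  have c2 := comon xs x Sxs Sx sxs.
  have iffE : m true x = m true xs <-> m false x = m false xs.
    split => E; apply/eqP; rewrite eq_le; apply/andP; split.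
    - by apply/c2; rewrite E.
    - by apply/c1; rewrite E.
    - by apply/c2; rewrite E.
    - by apply/c1; rewrite E.
  rewrite (key true xs Fxs).2 (key false xs Fxs).2.
  case: b {Xx Sx} => /=; rewrite ?(key true xs Fxs).2 ?(key false xs Fxs).2 => E; split => //.
  exact: (proj1 iffE E).
  exact: (proj2 iffE E).
move=> x1 x2 F1 F2 s12.
rewrite (key true _ F1).2 (key true _ F2).2 (key false _ F1).2 (key false _ F2).2.
have := comon x1 x2 (key true _ F1).1 (key true _ F2).1 s12.
by move=> [h1 h2]; split.
Qed.
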